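(* Let $\bar x:[0,\infty)\to(0,1]$ be the solution of $\bar x'(t)=-\bar x^2(t)-(1-\bar x^2(t))\bar x(t)$, $\bar x(0)=1$, and consider the system $$\bar s_2'=\bar x^2+(1-\bar x^2)\bar s_2^2,\qquad \bar s_3'=3\bar x^2+3(1-\bar x^2)\bar s_2\bar s_3,\qquad \bar s_4'=7\bar x^2+(1-\bar x^2)\bigl(4\bar s_2\bar s_4+3\bar s_3^2\bigr),$$ with $\bar s_2(0)=\bar s_3(0)=\bar s_4(0)=1$. Let $t_c\in(0,\infty)$ be the explosion time of $\bar s_2$, i.e. $\bar s_2$ is defined on $[0,t_c)$ and $\bar s_2(t)\to+\infty$ as $t\uparrow t_c$. Then $\bar s_2,\bar s_3,\bar s_4$ are uniquely defined on $[0,t_c)$, and as $t\uparrow t_c$ there exist positive constants $\alpha,\beta$ such that $$\bar s_2(t)\sim\frac{\alpha}{t_c-t},\qquad \bar s_3(t)\sim\beta\,\bar s_2(t)^3\sim\frac{\beta\alpha^3}{(t_c-t)^3},\qquad \bar s_4(t)\sim 3\beta^2\bar s_2(t)^5\sim\frac{3\beta^2\alpha^5}{(t_c-t)^5}.$$ More precisely, $\bar s_k(t)=\gamma_k(t_c-t)^{-(2k-3)}\bigl(1+O(t_c-t)\bigr)$ for $k=2,3,4$, with $\gamma_2=\alpha$, $\gamma_3=\beta\alpha^3$, $\gamma_4=3\beta^2\alpha^5$. Here $\alpha=(1-\bar x^2(t_c))^{-1}$ and $\beta=g(t_c)$, where $g$ is defined as follows: let $f$ be the solution of $f'=-\bar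 x^2 f^2-(1-\bar x^2)$, $f(0)=1$ (so that $f=1/\bar s_2$ on $[0,t_c)$ and $f(t_c)=0$), and let $g$ be the solution of $g'=3\bar x^2 f^3-3\bar x^2 f g$, $g(0)=1$, i.e. $g(t)=e^{-G(t)}+3e^{-G(t)}\int_0^t e^{G(u)}\bar x^2(u)f^3(u)\,du$ with $G(t)=3\int_0^t\bar x^2(u)f(u)\,du$.
   Context: It is known (and used as part of the setting) that $\bar x$ exists and is positive for all $t\ge0$ and that $\bar s_2$ explodes at a finite time $t_c>0$. The notation $a(t)\sim b(t)$ means $a(t)/b(t)\to1$. *)

(* Defs.v *)
From Stdlib Require Import Reals.
From Coquelicot Require Import Coquelicot.
Open Scope R_scope.

Definition cont_within (D : R -> Prop) (f : R -> R) (t : R) : Prop :=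
  filterlim f (within D (locally t)) (locally (f t)).

Definition xbar_sol (x : R -> R) : Prop :=
  x 0 = 1 /\
  (forall t, 0 <= t -> cont_within (fun u => 0 <= u) x t) /\
  (forall t, 0 < t -> is_derive x t (- (x t)^2 - (1 - (x t)^2) * x t)).

Definition s_sol (x : R -> R) (T : R) (s2 s3 s4 : R -> R) : Prop :=
  s2 0 = 1 /\ s3 0 = 1 /\ s4 0 = 1 /\
  (forall t, 0 <= t < T ->
     cont_within (fun u => 0 <= u < T) s2 t /\
     cont_within (fun u => 0 <= u < T) s3 t /\
     cont_within (fun u => 0 <= u < T) s4 t) /\
  (forall t, 0 < t < T ->
     is_derive s2 t ((x t)^2 + (1 - (x t)^2) * (s2 t)^2) /\
     is_derive s3 t (3 * (x t)^2 + 3 * (1 - (x t)^2) * s2 t * s3 t) /\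
     is_derive s4 t (7 * (x t)^2 +
                     (1 - (x t)^2) * (4 * s2 t * s4 t + 3 * (s3 t)^2))).

Definition s2_sol (x : R -> R) (T : R) (s2 : R -> R) : Prop :=
  s2 0 = 1 /\
  (forall t, 0 <= t < T -> cont_within (fun u => 0 <= u < T) s2 t) /\
  (forall t, 0 < t < T ->
     is_derive s2 t ((x t)^2 + (1 - (x t)^2) * (s2 t)^2)).

Definition f_sol (x : R -> R) (T : R) (f : R -> R) : Prop :=
  f 0 = 1 /\
  (forall t, 0 <= t <= T -> cont_within (fun u => 0 <= u <= T) f t) /\
  (forall t, 0 < t < T ->
     is_derive f t (- (x t)^2 * (f t)^2 - (1 - (x t)^2))).

Definition g_sol (x f : R -> R) (T : R) (g : R -> R) : Prop :=
  g 0 = 1 /\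
  (forall t, 0 <= t <= T -> cont_within (fun u => 0 <= u <= T) g t) /\
  (forall t, 0 < t < T ->
     is_derive g t (3 * (x t)^2 * (f t)^3 - 3 * (x t)^2 * f t * g t)).

Definition asymp_O (h : R -> R) (gam tc : R) (p : nat) : Prop :=
  exists C delta, 0 < delta /\
    forall t, tc - delta < t < tc ->
      Rabs (h t * (tc - t)^p / gam - 1) <= C * (tc - t).

Definition equiv_left (a b : R -> R) (tc : R) : Prop :=
  filterlim (fun t => a t / b t) (at_left tc) (locally 1).

(* Main.v *)
Require Import Defs.
From Stdlib Require Import Reals Lra Psatz.
From Coquelicot Require Import Coquelicot.
Open Scope R_scope.

Lemma ball_R x e y : ball x e y <-> Rabs (y - x) < e.
Proof. unfold ball; simpl; unfold AbsRing_ball, abs, minus, plus, opp; simpl. tauto. Qed.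

Definition cw (a b : R) (h : R -> R) (c : R) : Prop :=
  filterlim h (within (fun u => a <= u <= b) (locally c)) (locally (h c)).

Definition clamp (a b u : R) : R := Rmax a (Rmin b u).

Lemma clamp_in a b u : a <= b -> a <= clamp a b u <= b.
Proof. intros; unfold clamp, Rmax, Rmin; repeat destruct Rle_dec; lra. Qed.
Lemma clamp_id a b u : a <= u <= b -> clamp a b u = u.
Proof. intros; unfold clamp, Rmax, Rmin; repeat destruct Rle_dec; lra. Qed.
Lemma clamp_lip a b u v : a <= b -> Rabs (clamp a b u - clamp a b v) <= Rabs (u - v).
Proof. intros; unfold clamp, Rmax, Rmin; repeat destruct Rle_dec; split_Rabs; lra. Qed.

Lemma clamp_cont a b h s : a <= b -> cw a b h (clamp a b s) ->
  continuous (fun u => h (clamp a b u)) s.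
Proof.
  intros Hab Hc. unfold continuous.
  eapply filterlim_comp; [|exact Hc].
  intros P [eps He]. exists eps. intros y Hy. apply He.
  - apply ball_R. apply ball_R in Hy. eapply Rle_lt_trans; [apply clamp_lip|]; auto.
  - apply clamp_in; auto.
Qed.

Lemma fl_plus {F : (R -> Prop) -> Prop} {FF : Filter F} (f g : R -> R) a b :
  filterlim f F (locally a) -> filterlim g F (locally b) ->
  filterlim (fun x => f x + g x) F (locally (a + b)).
Proof. intros. eapply filterlim_comp_2; eauto. apply (filterlim_plus a b). Qed.
Lemma fl_mult {F : (R -> Prop) -> Prop} {FF : Filter F} (f g : R -> R) a b :
  filterlim f F (locally a) -> filterlim g F (locally b) ->
  filterlim (fun x => f x * g x) F (locally (a * b)).
Proof. intros. eapply filterlim_comp_2; eauto. apply (filterlim_mult a b). Qed.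
Lemma fl_const {F : (R -> Prop) -> Prop} {FF : Filter F} (a : R) :
  filterlim (fun _ => a) F (locally a).
Proof. apply filterlim_const. Qed.
Lemma fl_comp {F : (R -> Prop) -> Prop} {FF : Filter F} (f phi : R -> R) a :
  filterlim f F (locally a) -> continuous phi a ->
  filterlim (fun x => phi (f x)) F (locally (phi a)).
Proof. intros. eapply filterlim_comp; eauto. Qed.
Lemma fl_within_id (D : R -> Prop) c : filterlim (fun x => x) (within D (locally c)) (locally c).
Proof. intros P HP. apply filter_le_within. exact HP. Qed.
Lemma cw_of_within (D : R -> Prop) a b h c : (forall u, a <= u <= b -> D u) ->
  filterlim h (within D (locally c)) (locally (h c)) -> cw a b h c.
Proof.
  intros HD Hc P HP. specialize (Hc P HP). unfold filtermap, within in *.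
  eapply filter_imp; [|exact Hc]. simpl. intros y Hy Hab. apply Hy, HD, Hab.
Qed.
Lemma cw_of_cont a b (h : R -> R) (c : R) : continuous h c -> cw a b h c.
Proof. intros Hc P HP. apply filter_le_within. exact (Hc P HP). Qed.
Lemma cw_of_derive a b (h : R -> R) (c l : R) : is_derive h c l -> cw a b h c.
Proof. intros H. apply cw_of_cont. apply (ex_derive_continuous (K:=R_AbsRing) (V:=R_NormedModule)). exists l; exact H. Qed.

Lemma mono_le a b h dh : a <= b ->
  (forall c, a <= c <= b -> cw a b h c) ->
  (forall s, a < s < b -> is_derive h s (dh s)) ->
  (forall s, a < s < b -> dh s <= 0) -> h b <= h a.
Proof.
  intros Hab Hc Hd Hn.
  destruct (MVT_gen (fun u => h (clamp a b u)) a b (fun s => Rmin (dh s) 0)) as [c [Hc1 Hc2]].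
  - intros s Hs. rewrite Rmin_left, Rmax_right in Hs by lra.
    rewrite Rmin_left by (apply Hn; lra).
    apply is_derive_ext_loc with h; [| apply Hd; lra].
    assert (He : 0 < Rmin (s-a) (b-s)) by (apply Rmin_glb_lt; lra).
    exists (mkposreal _ He). intros y Hy. apply ball_R in Hy. simpl in Hy.
    assert (Rmin (s-a) (b-s) <= s - a) by apply Rmin_l.
    assert (Rmin (s-a) (b-s) <= b - s) by apply Rmin_r.
    rewrite clamp_id; auto. pose proof (proj1 (ball_R _ _ _) Hy) as Hy2. simpl in Hy2. apply Rabs_def2 in Hy2; lra.
  - intros s Hs. apply continuity_pt_filterlim. apply clamp_cont; auto. apply Hc, clamp_in; lra.
  - rewrite !clamp_id in Hc2 by lra. assert (Rmin (dh c) 0 <= 0) by apply Rmin_r. nra.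
Qed.

Lemma cw_plus a b f g c : cw a b f c -> cw a b g c -> cw a b (fun x => f x + g x) c.
Proof. intros. apply fl_plus; auto. Qed.
Lemma cw_mult a b f g c : cw a b f c -> cw a b g c -> cw a b (fun x => f x * g x) c.
Proof. intros. apply fl_mult; auto. Qed.
Lemma cw_const a b k c : cw a b (fun _ => k) c.
Proof. apply fl_const. Qed.
Lemma cw_id a b c : cw a b (fun x => x) c.
Proof. apply fl_within_id. Qed.
Lemma cw_comp a b f phi c : cw a b f c -> continuous phi (f c) -> cw a b (fun x => phi (f x)) c.
Proof. intros H H0. exact (fl_comp f phi (f c) H H0). Qed.
Lemma cw_opp a b f c : cw a b f c -> cw a b (fun x => - f x) c.
Proof.
  intros H. eapply filterlim_comp; [exact H|]. apply (filterlim_opp (f c)).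
Qed.
Lemma cw_minus a b f g c : cw a b f c -> cw a b g c -> cw a b (fun x => f x - g x) c.
Proof. intros. apply cw_plus; auto. apply cw_opp; auto. Qed.
Lemma cont_exp y : continuous exp y.
Proof. apply (ex_derive_continuous (K:=R_AbsRing) (V:=R_NormedModule)). exists (exp y). apply is_derive_exp. Qed.

Lemma Derive_eq (h : R -> R) (t d : R) : is_derive h t d -> Derive (fun y : R => h y) t = d.
Proof. intros H. apply is_derive_unique. exact H. Qed.

Ltac rwD := repeat match goal with |- context [Derive (fun y : R => ?h y) ?t] =>
  match goal with H : is_derive h t ?d |- _ => rewrite (Derive_eq h t d H) end end.
Ltac exD := match goal with H : is_derive ?h ?t ?d |- ex_derive ?h ?t => exists d; exact H end.
Ltac autoD := auto_derive; [repeat split; try exD | rwD].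

Lemma lip_bound a b h dh K : a <= b ->
  (forall c, a <= c <= b -> cw a b h c) ->
  (forall s, a < s < b -> is_derive h s (dh s)) ->
  (forall s, a < s < b -> Rabs (dh s) <= K) ->
  Rabs (h b - h a) <= K * (b - a).
Proof.
  intros Hab Hc Hd HK.
  assert (H1 : (fun s => h s - K * s) b <= (fun s => h s - K * s) a).
  { apply (mono_le a b (fun s => h s - K * s) (fun s => dh s - K)); auto.
    - intros c Hc'. apply cw_minus; auto. apply cw_mult; [apply cw_const|apply cw_id].
    - intros s Hs. pose proof (Hd s Hs). autoD. ring.
    - intros s Hs. specialize (HK s Hs). split_Rabs; lra. }
  assert (H2 : (fun s => - h s - K * s) b <= (fun s => - h s - K * s) a).
  { apply (mono_le a b (fun s => - h s - K * s) (fun s => - dh s - K)); auto.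
    - intros c Hc'. apply cw_minus; [apply cw_opp; auto|]. apply cw_mult; [apply cw_const|apply cw_id].
    - intros s Hs. pose proof (Hd s Hs). autoD. ring.
    - intros s Hs. specialize (HK s Hs). split_Rabs; lra. }
  simpl in *. split_Rabs; lra.
Qed.

Lemma U_zero (q c : R -> R) (M t : R) : 0 < t ->
  (forall u, 0 <= u <= t -> cw 0 t q u) -> q 0 = 0 ->
  (forall s, 0 < s < t -> is_derive q s (c s * q s)) ->
  (forall s, 0 < s < t -> Rabs (c s) <= M) -> q t = 0.
Proof.
  intros Ht Hc H0 Hd HM.
  assert (HE : (fun s => q s * q s * exp (- (2 * M) * s)) t <= (fun s => q s * q s * exp (- (2 * M) * s)) 0).
  { apply (mono_le 0 t (fun s => q s * q s * exp (- (2 * M) * s))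
      (fun s => 2 * (q s * q s) * (c s - M) * exp (- (2 * M) * s))); [lra| | |].
    - intros u Hu. apply cw_mult; [apply cw_mult; auto|].
      apply cw_comp; [apply cw_mult; [apply cw_const|apply cw_id]|apply cont_exp].
    - intros s Hs. pose proof (Hd s Hs). autoD. ring.
    - intros s Hs. specialize (HM s Hs). assert (0 < exp (- (2 * M) * s)) by apply exp_pos.
      assert (c s <= M) by (pose proof (Rle_abs (c s)); lra).
      assert (0 <= q s * q s) by nra.
      assert (0 <= q s * q s * exp (- (2 * M) * s)) by (apply Rmult_le_pos; lra). nra. }
  simpl in HE. rewrite H0 in HE. assert (0 < exp (- (2 * M) * t)) by apply exp_pos.
  assert (q t * q t <= 0) by nra. nra.
Qed.

Lemma RInt_deriv (A : R -> R) T t : 0 < T -> (forall s, s < T -> continuous A s) -> t < T ->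
  is_derive (fun t => RInt A 0 t) t (A t).
Proof.
  intros HT HA Ht. apply (is_derive_RInt A (fun t => RInt A 0 t) 0 t).
  - assert (He : 0 < T - t) by lra. exists (mkposreal _ He). intros b Hb.
    pose proof (proj1 (ball_R _ _ _) Hb) as Hb2. simpl in Hb2. apply Rabs_def2 in Hb2.
    apply (RInt_correct (V:=R_CompleteNormedModule)). apply (ex_RInt_continuous (V:=R_CompleteNormedModule)).
    intros z Hz. apply HA. assert (Rmax 0 b < T) by (apply Rmax_lub_lt; lra). lra.
  - apply HA; auto.
Qed.

Lemma LIN_core (P Q A B : R -> R) y0 t : is_derive P t (A t) -> is_derive Q t (exp (- P t) * B t) ->
  is_derive (fun t => exp (P t) * (y0 + Q t)) t (A t * (exp (P t) * (y0 + Q t)) + B t).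
Proof.
  intros H1 H2. autoD.
  assert (E : exp (P t) * exp (- P t) = 1) by (rewrite <- exp_plus, Rplus_opp_r, exp_0; reflexivity).
  transitivity (A t * (exp (P t) * (y0 + Q t)) + (exp (P t) * exp (- P t)) * B t); [ring| rewrite E; ring].
Qed.

Lemma RInt_pt (f : R -> R) a : RInt f a a = 0.
Proof. apply (RInt_point (V:=R_CompleteNormedModule)). Qed.

Definition Ysol (A B : R -> R) (y0 t : R) : R :=
  exp (RInt A 0 t) * (y0 + RInt (fun s => exp (- RInt A 0 s) * B s) 0 t).

Lemma LIN (A B : R -> R) T y0 : 0 < T -> (forall s, s < T -> continuous A s) ->
  (forall s, s < T -> continuous B s) ->
  Ysol A B y0 0 = y0 /\ forall t, t < T -> is_derive (Ysol A B y0) t (A t * Ysol A B y0 t + B t).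
Proof.
  intros HT HA HB. split.
  - unfold Ysol. rewrite !RInt_pt, exp_0. ring.
  - intros t Ht. unfold Ysol. apply LIN_core.
    + apply RInt_deriv with T; auto.
    + apply (RInt_deriv (fun s => exp (- RInt A 0 s) * B s) T t); auto.
      intros s Hs. apply (fl_mult (F:=locally s)); [|apply HB; auto].
      apply (fl_comp (F:=locally s) (fun s => - RInt A 0 s) exp); [|apply cont_exp].
      eapply filterlim_comp; [|apply (filterlim_opp (RInt A 0 s))].
      apply (ex_derive_continuous (K:=R_AbsRing) (V:=R_NormedModule)).
      exists (A s). apply RInt_deriv with T; auto.
Qed.

Lemma exp_mono a b : a <= b -> exp a <= exp b.
Proof. intros H. destruct (Rle_lt_or_eq_dec _ _ H) as [H1|H1]; [left; apply exp_increasing; auto| subst; lra]. Qed.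

Lemma cont_pt (A : R -> R) s : continuous A s -> continuity_pt A s.
Proof. intros H. apply continuity_pt_filterlim. exact H. Qed.

Lemma LIN_unique (A B : R -> R) T y0 (y : R -> R) t : 0 < T ->
  (forall s, s < T -> continuous A s) -> (forall s, s < T -> continuous B s) ->
  0 <= t < T -> (forall u, 0 <= u <= t -> cw 0 t y u) -> y 0 = y0 ->
  (forall s, 0 < s < t -> is_derive y s (A s * y s + B s)) -> y t = Ysol A B y0 t.
Proof.
  intros HT HA HB Ht Hc H0 Hd.
  destruct (LIN A B T y0 HT HA HB) as [Y0 YD].
  destruct (Req_dec t 0) as [->|Ht0]; [rewrite Y0; auto|].
  destruct (continuity_ab_maj A 0 t) as [m1 [Hm1 _]]; [lra| intros c Hc'; apply cont_pt, HA; lra|].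
  destruct (continuity_ab_min A 0 t) as [m2 [Hm2 _]]; [lra| intros c Hc'; apply cont_pt, HA; lra|].
  assert (E : (fun s => y s - Ysol A B y0 s) t = 0).
  { apply (U_zero (fun s => y s - Ysol A B y0 s) A (Rmax (A m1) (- A m2)) t); [lra| | | |].
    - intros u Hu. apply cw_minus; auto. apply cw_of_derive with (A u * Ysol A B y0 u + B u). apply YD; lra.
    - rewrite H0, Y0; ring.
    - intros s Hs. pose proof (Hd s Hs). pose proof (YD s ltac:(lra)). autoD. ring.
    - intros s Hs. specialize (Hm1 s ltac:(lra)). specialize (Hm2 s ltac:(lra)).
      assert (A m1 <= Rmax (A m1) (- A m2)) by apply Rmax_l.
      assert (- A m2 <= Rmax (A m1) (- A m2)) by apply Rmax_r.
      split_Rabs; lra. }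
  simpl in E. lra.
Qed.

Lemma ex_RInt_c (A : R -> R) T t : 0 < T -> (forall s, s < T -> continuous A s) -> t < T -> ex_RInt A 0 t.
Proof.
  intros HT HA Ht. apply (ex_RInt_continuous (V:=R_CompleteNormedModule)).
  intros z Hz. apply HA. assert (Rmax 0 t < T) by (apply Rmax_lub_lt; lra). lra.
Qed.

Lemma LIN_lower (A B : R -> R) T y0 M t : 0 < T ->
  (forall s, s < T -> continuous A s) -> (forall s, s < T -> continuous B s) ->
  0 <= t < T -> 0 <= y0 -> (forall s, 0 < s < t -> 0 <= B s) -> (forall s, 0 < s < t -> - M <= A s) ->
  y0 * exp (- M * t) <= Ysol A B y0 t.
Proof.
  intros HT HA HB Ht Hy0 HBp HAm.
  assert (I1 : - M * t <= RInt A 0 t).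
  { replace (- M * t) with (RInt (fun _ => - M) 0 t).
    - apply RInt_le; [lra| apply ex_RInt_const | apply ex_RInt_c with T; auto; lra | auto].
    - rewrite (RInt_const (V:=R_CompleteNormedModule)). simpl. unfold scal; simpl. unfold mult; simpl. ring. }
  assert (I2 : 0 <= RInt (fun s => exp (- RInt A 0 s) * B s) 0 t).
  { apply RInt_ge_0; [lra| |].
    - apply ex_RInt_c with T; auto; [|lra]. intros s Hs. apply (fl_mult (F:=locally s)); [|apply HB; auto].
      apply (fl_comp (F:=locally s) (fun s => - RInt A 0 s) exp); [|apply cont_exp].
      eapply filterlim_comp; [|apply (filterlim_opp (RInt A 0 s))].
      apply (ex_derive_continuous (K:=R_AbsRing) (V:=R_NormedModule)).
      exists (A s). apply RInt_deriv with T; auto.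
    - intros s Hs. apply Rmult_le_pos; [left; apply exp_pos| apply HBp; auto]. }
  unfold Ysol. assert (exp (- M * t) <= exp (RInt A 0 t)) by (apply exp_mono; auto).
  assert (0 < exp (- M * t)) by apply exp_pos. nra.
Qed.

Definition O1 (tc : R) (h : R -> R) : Prop :=
  exists C delta, 0 < delta /\ forall t, tc - delta < t < tc -> Rabs (h t - 1) <= C * (tc - t).

Lemma O1_ext tc (a b : R -> R) : 0 < tc -> O1 tc a -> (forall t, 0 < t < tc -> a t = b t) -> O1 tc b.
Proof.
  intros Htc [C [d [Hd Ha]]] Hab. exists C, (Rmin d tc). split; [apply Rmin_glb_lt; auto|].
  intros t Ht. assert (Rmin d tc <= d) by apply Rmin_l. assert (Rmin d tc <= tc) by apply Rmin_r.
  rewrite <- Hab by lra. apply Ha; lra.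
Qed.

Lemma O1_mult tc (a b : R -> R) : O1 tc a -> O1 tc b -> O1 tc (fun t => a t * b t).
Proof.
  intros [Ca [da [Hda Ha]]] [Cb [db [Hdb Hb]]].
  exists (2 * Rabs Ca + Rabs Cb), (Rmin (Rmin da db) (/ (Rabs Cb + 1))).
  assert (0 < / (Rabs Cb + 1)) by (apply Rinv_0_lt_compat; pose proof (Rabs_pos Cb); lra).
  split; [apply Rmin_glb_lt; [apply Rmin_glb_lt|]; auto|].
  intros t Ht.
  assert (Rmin (Rmin da db) (/ (Rabs Cb + 1)) <= Rmin da db) by apply Rmin_l.
  assert (Rmin (Rmin da db) (/ (Rabs Cb + 1)) <= / (Rabs Cb + 1)) by apply Rmin_r.
  assert (Rmin da db <= da) by apply Rmin_l. assert (Rmin da db <= db) by apply Rmin_r.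
  specialize (Ha t ltac:(lra)). specialize (Hb t ltac:(lra)).
  assert (He : 0 < tc - t) by lra.
  assert (Ca * (tc - t) <= Rabs Ca * (tc - t)) by (apply Rmult_le_compat_r; [lra| apply Rle_abs]).
  assert (Cb * (tc - t) <= Rabs Cb * (tc - t)) by (apply Rmult_le_compat_r; [lra| apply Rle_abs]).
  assert (Rabs Cb * (tc - t) <= 1).
  { assert ((tc - t) * (Rabs Cb + 1) <= / (Rabs Cb + 1) * (Rabs Cb + 1)) by (apply Rmult_le_compat_r; [pose proof (Rabs_pos Cb); lra| lra]).
    rewrite Rinv_l in H6 by (pose proof (Rabs_pos Cb); lra). nra. }
  assert (Hb2 : Rabs (b t) <= 2) by (revert Hb; split_Rabs; lra).
  replace (a t * b t - 1) with ((a t - 1) * b t + (b t - 1)) by ring.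
  eapply Rle_trans; [apply Rabs_triang|]. rewrite Rabs_mult.
  assert (Rabs (a t - 1) * Rabs (b t) <= Rabs Ca * (tc - t) * 2).
  { apply Rmult_le_compat; try apply Rabs_pos; lra. }
  lra.
Qed.

Lemma O1_lim tc (a : R -> R) : O1 tc a -> filterlim a (at_left tc) (locally 1).
Proof.
  intros [C [d [Hd Ha]]] P [eps He].
  assert (Hr : 0 < Rmin d (eps / (Rabs C + 1))).
  { apply Rmin_glb_lt; auto. apply Rdiv_lt_0_compat; [apply cond_pos| pose proof (Rabs_pos C); lra]. }
  unfold filtermap, at_left, within. exists (mkposreal _ Hr). intros t Ht Htlt. apply He.
  apply ball_R. pose proof (proj1 (ball_R _ _ _) Ht) as Ht2. simpl in Ht2.
  assert (Rmin d (eps / (Rabs C + 1)) <= d) by apply Rmin_l.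
  assert (Rmin d (eps / (Rabs C + 1)) <= eps / (Rabs C + 1)) by apply Rmin_r.
  assert (Hab : Rabs (t - tc) = tc - t) by (rewrite Rabs_left; lra).
  rewrite Hab in Ht2.
  specialize (Ha t ltac:(lra)).
  assert (C * (tc - t) <= Rabs C * (tc - t)) by (apply Rmult_le_compat_r; [lra| apply Rle_abs]).
  assert (Rabs C * (tc - t) < eps).
  { assert ((tc - t) * (Rabs C + 1) < eps / (Rabs C + 1) * (Rabs C + 1)) by (apply Rmult_lt_compat_r; [pose proof (Rabs_pos C); lra| lra]).
    unfold Rdiv in H2. rewrite Rmult_assoc, Rinv_l in H2 by (pose proof (Rabs_pos C); lra). nra. }
  lra.
Qed.

Lemma equiv_of_O1 tc (a b phi : R -> R) : 0 < tc -> O1 tc phi ->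
  (forall t, 0 < t < tc -> a t / b t = phi t) -> equiv_left a b tc.
Proof.
  intros Htc H E. unfold equiv_left. apply O1_lim. apply O1_ext with phi; auto.
  intros; symmetry; auto.
Qed.

Lemma cw_of_open a b c (h : R -> R) : a <= c < b ->
  filterlim h (within (fun u => a <= u < b) (locally c)) (locally (h c)) -> cw a b h c.
Proof.
  intros Hc H P HP. specialize (H P HP). unfold filtermap, within in *.
  destruct H as [e He].
  assert (Hr : 0 < Rmin e (b - c)) by (apply Rmin_glb_lt; [apply cond_pos| lra]).
  exists (mkposreal _ Hr). intros y Hy Hay.
  pose proof (proj1 (ball_R _ _ _) Hy) as Hy2. simpl in Hy2.
  assert (Rmin e (b - c) <= e) by apply Rmin_l. assert (Rmin e (b - c) <= b - c) by apply Rmin_r.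
  apply He.
  - apply ball_R. lra.
  - apply Rabs_def2 in Hy2. lra.
Qed.

Lemma cw_sub a b a' b' (h : R -> R) c : a <= a' -> b' <= b -> cw a b h c -> cw a' b' h c.
Proof. intros H1 H2 H. apply cw_of_within with (fun u => a <= u <= b); auto. intros; lra. Qed.

Lemma s2mono (x s : R -> R) T : (forall t, 0 <= t -> 0 < x t <= 1) ->
  (forall t, 0 <= t < T -> cont_within (fun u => 0 <= u < T) s t) ->
  (forall t, 0 < t < T -> is_derive s t ((x t)^2 + (1 - (x t)^2) * (s t)^2)) ->
  forall a b, 0 <= a <= b -> b < T -> s a <= s b.
Proof.
  intros Hx Hc Hd a b Hab HbT.
  assert (H : (fun u => - s u) b <= (fun u => - s u) a).
  { apply (mono_le a b (fun u => - s u) (fun u => - ((x u)^2 + (1 - (x u)^2) * (s u)^2))); [lra| | |].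
    - intros c Hc'. apply cw_opp. apply cw_of_within with (fun u => 0 <= u < T); [intros; lra|]. apply Hc; lra.
    - intros u Hu. pose proof (Hd u ltac:(lra)). autoD. ring.
    - intros u Hu. specialize (Hx u ltac:(lra)). assert (0 <= (x u)^2 <= 1) by (simpl; nra).
      assert (0 <= (s u)^2) by (simpl; nra). nra. }
  simpl in H. lra.
Qed.

Lemma s_unique (x : R -> R) tc (a2 a3 a4 b2 b3 b4 : R -> R) :
  (forall t, 0 <= t -> 0 < x t <= 1) -> 0 < tc ->
  s_sol x tc a2 a3 a4 -> s_sol x tc b2 b3 b4 ->
  forall t, 0 <= t < tc -> a2 t = b2 t /\ a3 t = b3 t /\ a4 t = b4 t.
Proof.
  intros Hx Htc [A2 [A3 [A4 [Ac Ad]]]] [B2 [B3 [B4 [Bc Bd]]]].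
  assert (Ha2 : forall a b, 0 <= a <= b -> b < tc -> a2 a <= a2 b).
  { apply s2mono with x; auto. intros t Ht; apply Ac; auto. intros t Ht; apply Ad; auto. }
  assert (Hb2 : forall a b, 0 <= a <= b -> b < tc -> b2 a <= b2 b).
  { apply s2mono with x; auto. intros t Ht; apply Bc; auto. intros t Ht; apply Bd; auto. }
  assert (K : forall s, 0 <= s -> 0 <= 1 - (x s)^2 <= 1).
  { intros s Hs. specialize (Hx s Hs). simpl. nra. }
  assert (CW : forall (h : R -> R) t u, 0 <= t < tc -> 0 <= u <= t ->
     (forall t, 0 <= t < tc -> cont_within (fun u => 0 <= u < tc) h t) -> cw 0 t h u).
  { intros h t u Ht Hu Hh. apply cw_of_within with (fun u => 0 <= u < tc); [intros; lra|]. apply Hh; lra. }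
  assert (E2 : forall t, 0 <= t < tc -> a2 t = b2 t).
  { intros t Ht. destruct (Req_dec t 0) as [->|Ht0]; [rewrite A2, B2; auto|].
    assert (Z : (fun s => a2 s - b2 s) t = 0).
    { apply (U_zero (fun s => a2 s - b2 s) (fun s => (1 - (x s)^2) * (a2 s + b2 s)) (a2 t + b2 t) t); [lra| | | |].
      - intros u Hu. apply cw_minus; apply (CW _ t); auto; intros; [apply Ac|apply Bc]; auto.
      - rewrite A2, B2; ring.
      - intros s Hs. destruct (Ad s ltac:(lra)) as [D2 _]. destruct (Bd s ltac:(lra)) as [D2' _].
        autoD. ring.
      - intros s Hs. specialize (K s ltac:(lra)).
        assert (1 <= a2 s) by (rewrite <- A2; apply Ha2; lra).
        assert (1 <= b2 s) by (rewrite <- B2; apply Hb2; lra).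
        assert (a2 s <= a2 t) by (apply Ha2; lra). assert (b2 s <= b2 t) by (apply Hb2; lra).
        rewrite Rabs_pos_eq by nra. nra. }
    simpl in Z; lra. }
  assert (E3 : forall t, 0 <= t < tc -> a3 t = b3 t).
  { intros t Ht. destruct (Req_dec t 0) as [->|Ht0]; [rewrite A3, B3; auto|].
    assert (Z : (fun s => a3 s - b3 s) t = 0).
    { apply (U_zero (fun s => a3 s - b3 s) (fun s => 3 * (1 - (x s)^2) * a2 s) (3 * a2 t) t); [lra| | | |].
      - intros u Hu. apply cw_minus; apply (CW _ t); auto; intros; [apply Ac|apply Bc]; auto.
      - rewrite A3, B3; ring.
      - intros s Hs. destruct (Ad s ltac:(lra)) as [_ [D3 _]]. destruct (Bd s ltac:(lra)) as [_ [D3' _]].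
        autoD. rewrite (E2 s ltac:(lra)). ring.
      - intros s Hs. specialize (K s ltac:(lra)).
        assert (1 <= a2 s) by (rewrite <- A2; apply Ha2; lra).
        assert (a2 s <= a2 t) by (apply Ha2; lra).
        rewrite Rabs_pos_eq by nra. nra. }
    simpl in Z; lra. }
  assert (E4 : forall t, 0 <= t < tc -> a4 t = b4 t).
  { intros t Ht. destruct (Req_dec t 0) as [->|Ht0]; [rewrite A4, B4; auto|].
    assert (Z : (fun s => a4 s - b4 s) t = 0).
    { apply (U_zero (fun s => a4 s - b4 s) (fun s => 4 * (1 - (x s)^2) * a2 s) (4 * a2 t) t); [lra| | | |].
      - intros u Hu. apply cw_minus; apply (CW _ t); auto; intros; [apply Ac|apply Bc]; auto.
      - rewrite A4, B4; ring.
      - intros s Hs. destruct (Ad s ltac:(lra)) as [_ [_ D4]]. destruct (Bd s ltac:(lra)) as [_ [_ D4']].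
        autoD. rewrite (E2 s ltac:(lra)), (E3 s ltac:(lra)). ring.
      - intros s Hs. specialize (K s ltac:(lra)).
        assert (1 <= a2 s) by (rewrite <- A2; apply Ha2; lra).
        assert (a2 s <= a2 t) by (apply Ha2; lra).
        rewrite Rabs_pos_eq by nra. nra. }
    simpl in Z; lra. }
  intros t Ht. auto.
Qed.

Lemma cw_pow a b (h : R -> R) c n : cw a b h c -> cw a b (fun v => h v ^ n) c.
Proof.
  intros H. induction n as [|n IH].
  - simpl. apply cw_const.
  - simpl. apply cw_mult; auto.
Qed.

Lemma clamp_cont2 a b (h : R -> R) : a <= b -> (forall c, a <= c <= b -> cw a b h c) ->
  forall s, continuous (fun u => h (clamp a b u)) s.
Proof. intros Hab H s. apply clamp_cont; auto. apply H, clamp_in; auto. Qed.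

Lemma within_sub (D D' : R -> Prop) (h : R -> R) c L : (forall u, D' u -> D u) ->
  filterlim h (within D (locally c)) L -> filterlim h (within D' (locally c)) L.
Proof.
  intros HD Hc P HP. specialize (Hc P HP). unfold filtermap, within in *.
  eapply filter_imp; [|exact Hc]. simpl. intros y Hy Hab. apply Hy, HD, Hab.
Qed.

Lemma fl_pow {F : (R -> Prop) -> Prop} {FF : Filter F} (h : R -> R) a n :
  filterlim h F (locally a) -> filterlim (fun v => h v ^ n) F (locally (a ^ n)).
Proof.
  intros H. induction n as [|n IH].
  - simpl. apply fl_const.
  - simpl. apply fl_mult; auto.
Qed.

Lemma clamp_lt a b u : a < b -> u < b -> clamp a b u < b.
Proof. intros; unfold clamp, Rmax, Rmin; repeat destruct Rle_dec; lra. Qed.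

Lemma div_le_den a b c : 0 < c -> c <= b -> 0 <= a -> a / b <= a / c.
Proof.
  intros Hc Hcb Ha. unfold Rdiv. apply Rmult_le_compat_l; auto.
  apply Rinv_le_contravar; auto.
Qed.

Lemma abs_le_of_sq v V : 1 <= V -> v ^ 2 + 1 <= V -> Rabs v <= V.
Proof.
  intros H1 H2. destruct (Rle_dec (Rabs v) V) as [H|H]; auto.
  exfalso. assert (V < Rabs v) by lra. rewrite <- (pow2_abs v) in H2.
  assert (V * V < Rabs v * Rabs v) by (apply Rmult_le_0_lt_compat; lra).
  simpl in H2. nra.
Qed.

Theorem theorem3p1 :
  forall (x : R -> R) (tc : R) (s2 f g : R -> R),
    xbar_sol x ->
    (forall t, 0 <= t -> 0 < x t <= 1) ->
    0 < tc ->
    s2_sol x tc s2 ->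
    filterlim s2 (at_left tc) (Rbar_locally p_infty) ->
    f_sol x tc f ->
    g_sol x f tc g ->
    let alpha := / (1 - (x tc)^2) in
    let beta := g tc in
    0 < alpha /\ 0 < beta /\
    (exists s3 s4 : R -> R, s_sol x tc s2 s3 s4) /\
    (forall a2 a3 a4 b2 b3 b4 : R -> R,
        s_sol x tc a2 a3 a4 -> s_sol x tc b2 b3 b4 ->
        forall t, 0 <= t < tc -> a2 t = b2 t /\ a3 t = b3 t /\ a4 t = b4 t) /\
    (forall s3 s4 : R -> R, s_sol x tc s2 s3 s4 ->
        equiv_left s2 (fun t => alpha / (tc - t)) tc /\
        equiv_left s3 (fun t => beta * (s2 t)^3) tc /\
        equiv_left s3 (fun t => beta * alpha^3 / (tc - t)^3) tc /\
        equiv_left s4 (fun t => 3 * beta^2 * (s2 t)^5) tc /\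
        equiv_left s4 (fun t => 3 * beta^2 * alpha^5 / (tc - t)^5) tc /\
        asymp_O s2 alpha tc 1 /\
        asymp_O s3 (beta * alpha^3) tc 3 /\
        asymp_O s4 (3 * beta^2 * alpha^5) tc 5).
Proof.
  intros x tc s2 f g Hx Hxpos Htc Hs2 Hlim Hf Hg alpha beta.
  destruct Hx as [X0 [Xc Xd]].
  destruct Hs2 as [S0 [Sc Sd]].
  destruct Hf as [F0 [Fc Fd]].
  destruct Hg as [G0 [Gc Gd]].
  assert (K : forall s, 0 <= s -> 0 <= 1 - (x s)^2 <= 1 /\ 0 < (x s)^2 <= 1).
  { intros s Hs. specialize (Hxpos s Hs). simpl. nra. }
  assert (CWx : forall a b c, 0 <= a -> a <= c <= b -> cw a b x c).
  { intros a b c Ha Hc. apply cw_of_within with (fun u => 0 <= u); [intros; lra|]. apply Xc; lra. }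
  assert (CWf : forall a b c, 0 <= a -> b <= tc -> a <= c <= b -> cw a b f c).
  { intros a b c Ha Hb Hc. apply cw_of_within with (fun u => 0 <= u <= tc); [intros; lra|]. apply Fc; lra. }
  assert (CWg : forall a b c, 0 <= a -> b <= tc -> a <= c <= b -> cw a b g c).
  { intros a b c Ha Hb Hc. apply cw_of_within with (fun u => 0 <= u <= tc); [intros; lra|]. apply Gc; lra. }
  assert (CWs : forall a b c, 0 <= a -> b < tc -> a <= c <= b -> cw a b s2 c).
  { intros a b c Ha Hb Hc. apply cw_of_within with (fun u => 0 <= u < tc); [intros; lra|]. apply Sc; lra. }
  assert (Xtc : x tc < 1).
  { assert (H : (fun s => x s * exp s) tc <= (fun s => x s * exp s) 0).
    { apply (mono_le 0 tc (fun s => x s * exp s) (fun s => exp s * (x s)^2 * (x s - 1))); [lra| | |].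
      - intros c Hc. apply cw_mult; [apply CWx; lra|]. apply cw_comp; [apply cw_id|apply cont_exp].
      - intros s Hs. pose proof (Xd s ltac:(lra)). autoD. ring.
      - intros s Hs. specialize (Hxpos s ltac:(lra)). assert (0 < exp s) by apply exp_pos.
        assert (0 <= exp s * (x s)^2) by (simpl; nra). nra. }
    simpl in H. rewrite X0, exp_0 in H. assert (1 < exp tc) by (rewrite <- exp_0; apply exp_increasing; lra).
    specialize (Hxpos tc ltac:(lra)). nra. }
  set (kc := 1 - (x tc)^2).
  assert (Hkc : 0 < kc <= 1) by (unfold kc; specialize (Hxpos tc ltac:(lra)); simpl; nra).
  assert (Halpha : 0 < alpha) by (unfold alpha; fold kc; apply Rinv_0_lt_compat; lra).
  assert (X2 : forall t, 0 < t <= tc -> Rabs ((x t)^2 - (x tc)^2) <= 4 * (tc - t)).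
  { intros t Ht.
    assert (H : Rabs (x tc - x t) <= 2 * (tc - t)).
    { apply (lip_bound t tc x (fun s => - (x s)^2 - (1 - (x s)^2) * x s)); [lra| | |].
      - intros c Hc. apply CWx; lra.
      - intros s Hs. apply Xd; lra.
      - intros s Hs. specialize (Hxpos s ltac:(lra)). simpl. rewrite Rabs_left1 by nra. nra. }
    pose proof (Hxpos t ltac:(lra)). pose proof (Hxpos tc ltac:(lra)).
    replace ((x t)^2 - (x tc)^2) with ((x tc - x t) * (- (x tc + x t))) by ring.
    rewrite Rabs_mult, Rabs_Ropp, (Rabs_pos_eq (x tc + x t)) by lra.
    apply Rle_trans with (2 * (tc - t) * 2); [|lra].
    apply Rmult_le_compat; try lra. apply Rabs_pos. }
  assert (S2m : forall a b, 0 <= a <= b -> b < tc -> s2 a <= s2 b).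
  { apply s2mono with x; auto. }
  assert (S2ge1 : forall t, 0 <= t < tc -> 1 <= s2 t).
  { intros t Ht. rewrite <- S0. apply S2m; lra. }
  assert (Fm : forall a b, 0 <= a <= b -> b <= tc -> f b <= f a).
  { intros a b Hab Hb. apply (mono_le a b f (fun s => - (x s)^2 * (f s)^2 - (1 - (x s)^2))); [lra| | |].
    - intros c Hc. apply CWf; lra.
    - intros s Hs. apply Fd; lra.
    - intros s Hs. destruct (K s ltac:(lra)). assert (0 <= (f s)^2) by (simpl; nra). nra. }
  assert (FS : forall t, 0 <= t < tc -> f t * s2 t = 1).
  { intros t Ht. destruct (Req_dec t 0) as [->|Ht0]; [rewrite F0, S0; ring|].
    assert (Z : (fun s => f s * s2 s - 1) t = 0).
    { apply (U_zero (fun s => f s * s2 s - 1) (fun s => (1 - (x s)^2) * s2 s - (x s)^2 * f s)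
        (s2 t + (1 + Rabs (f tc))) t); [lra| | | |].
      - intros u Hu. apply cw_minus; [|apply cw_const]. apply cw_mult; [apply CWf|apply CWs]; lra.
      - rewrite F0, S0; ring.
      - intros s Hs. pose proof (Fd s ltac:(lra)). pose proof (Sd s ltac:(lra)). autoD. ring.
      - intros s Hs. destruct (K s ltac:(lra)) as [K1 K2].
        assert (1 <= s2 s) by (apply S2ge1; lra). assert (s2 s <= s2 t) by (apply S2m; lra).
        assert (f s <= 1) by (rewrite <- F0; apply Fm; lra). assert (f tc <= f s) by (apply Fm; lra).
        assert (Hf1 : Rabs (f s) <= 1 + Rabs (f tc)) by (pose proof (Rle_abs (- f tc)); rewrite Rabs_Ropp in *; split_Rabs; lra).
        eapply Rle_trans; [apply Rabs_triang|]. rewrite Rabs_Ropp, !Rabs_mult.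
        rewrite (Rabs_pos_eq (1 - _)) by lra. rewrite (Rabs_pos_eq (x s ^ 2)) by lra.
        rewrite (Rabs_pos_eq (s2 s)) by lra.
        assert ((1 - x s ^ 2) * s2 s <= s2 t) by nra.
        assert (x s ^ 2 * Rabs (f s) <= 1 + Rabs (f tc)) by (pose proof (Rabs_pos (f s)); nra).
        lra. }
    simpl in Z; lra. }
  assert (Finv : forall t, 0 <= t < tc -> f t = / s2 t).
  { intros t Ht. pose proof (FS t Ht). pose proof (S2ge1 t Ht). field_simplify_eq; lra. }
  assert (Fpos : forall t, 0 <= t < tc -> 0 < f t).
  { intros t Ht. rewrite Finv by auto. apply Rinv_0_lt_compat. pose proof (S2ge1 t Ht); lra. }
  assert (Ftc : f tc = 0).
  { apply (filterlim_locally_unique (F := at_left tc) f).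
    - intros P HP. specialize (Fc tc ltac:(lra) P HP). unfold filtermap, at_left, within in *.
      destruct Fc as [e He].
      assert (Hr : 0 < Rmin e tc) by (apply Rmin_glb_lt; [apply cond_pos| lra]).
      exists (mkposreal _ Hr). intros y Hy Hyt.
      pose proof (proj1 (ball_R _ _ _) Hy) as Hy2. simpl in Hy2.
      assert (Rmin e tc <= e) by apply Rmin_l. assert (Rmin e tc <= tc) by apply Rmin_r.
      apply He; [apply ball_R; lra|]. apply Rabs_def2 in Hy2; lra.
    - intros P [eps He].
      assert (H1 := Hlim (fun y => / eps < y)). simpl in H1.
      assert (H2 : at_left tc (fun y => / eps < s2 y)).
      { apply H1. exists (/ eps). intros; auto. }
      assert (H3 : at_left tc (fun y => 0 < y)).
      { exists (mkposreal _ Htc). intros y Hy Hyt. pose proof (proj1 (ball_R _ _ _) Hy) as Hy2. simpl in Hy2.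
        apply Rabs_def2 in Hy2; lra. }
      assert (H4 : at_left tc (fun y => y < tc)) by (exists (mkposreal _ Htc); intros; auto).
      unfold filtermap. generalize (filter_and _ _ (filter_and _ _ H2 H3) H4). apply filter_imp.
      intros y [[Hy1 Hy2] Hy3]. apply He. apply ball_R.
      assert (0 < eps) by apply cond_pos.
      rewrite Finv by lra. pose proof (S2ge1 y ltac:(lra)).
      assert (/ s2 y < eps).
      { replace (pos eps) with (/ / eps) by (field; lra). apply Rinv_lt_contravar; auto.
        apply Rmult_lt_0_compat; [apply Rinv_0_lt_compat|]; lra. }
      assert (0 < / s2 y) by (apply Rinv_0_lt_compat; lra).
      rewrite Rminus_0_r, Rabs_pos_eq; lra. }
  assert (F2 : forall t, 0 <= t <= tc -> 0 <= f t <= tc - t /\ f t <= 1).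
  { intros t Ht. assert (f tc <= f t) by (apply Fm; lra). assert (f t <= 1) by (rewrite <- F0; apply Fm; lra).
    assert (Hft : Rabs (f tc - f t) <= 1 * (tc - t)).
    { apply (lip_bound t tc f (fun s => - (x s)^2 * (f s)^2 - (1 - (x s)^2))); [lra| | |].
      - intros c Hc. apply CWf; lra.
      - intros s Hs. apply Fd; lra.
      - intros s Hs. destruct (K s ltac:(lra)) as [K1 K2].
        assert (f tc <= f s) by (apply Fm; lra). assert (f s <= 1) by (rewrite <- F0; apply Fm; lra).
        assert (0 <= (f s)^2 <= 1) by (simpl; nra).
        rewrite Rabs_left1 by nra. nra. }
    rewrite Ftc in *. split; [split|]; try lra. revert Hft; split_Rabs; lra. }
  set (cl := clamp 0 tc).
  set (Ag := fun u => -3 * x (cl u) ^ 2 * f (cl u)).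
  set (Bg := fun u => 3 * x (cl u) ^ 2 * f (cl u) ^ 3).
  assert (CAg : forall s, continuous Ag s).
  { intros s. apply (clamp_cont2 0 tc (fun v => -3 * x v ^ 2 * f v)); [lra|].
    intros c Hc. apply cw_mult; [apply cw_mult; [apply cw_const| apply cw_pow, CWx]| apply CWf]; lra. }
  assert (CBg : forall s, continuous Bg s).
  { intros s. apply (clamp_cont2 0 tc (fun v => 3 * x v ^ 2 * f v ^ 3)); [lra|].
    intros c Hc. apply cw_mult; [apply cw_mult; [apply cw_const| apply cw_pow, CWx]| apply cw_pow, CWf]; lra. }
  assert (Gsol : forall t, 0 <= t <= tc -> g t = Ysol Ag Bg 1 t).
  { intros t Ht. apply (LIN_unique Ag Bg (tc + 1)); auto; try lra.
    - intros u Hu. apply CWg; lra.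
    - intros s Hs. unfold Ag, Bg, cl. rewrite clamp_id by lra.
      replace (-3 * x s ^ 2 * f s * g s + 3 * x s ^ 2 * f s ^ 3) with (3 * x s ^ 2 * f s ^ 3 - 3 * x s ^ 2 * f s * g s) by ring.
      apply Gd; lra. }
  assert (Glow : forall t, 0 <= t <= tc -> exp (- 3 * tc) <= g t).
  { intros t Ht. rewrite Gsol by auto.
    apply Rle_trans with (1 * exp (- 3 * t)); [rewrite Rmult_1_l; apply exp_mono; lra|].
    apply (LIN_lower Ag Bg (tc + 1) 1 3 t); auto; try lra.
    - intros s Hs. unfold Bg, cl. rewrite clamp_id by lra. destruct (K s ltac:(lra)).
      destruct (F2 s ltac:(lra)). assert (0 <= f s ^ 3) by (apply pow_le; lra). nra.
    - intros s Hs. unfold Ag, cl. rewrite clamp_id by lra. destruct (K s ltac:(lra)).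
      destruct (F2 s ltac:(lra)). nra. }
  assert (Hbeta : 0 < beta).
  { unfold beta. apply Rlt_le_trans with (exp (- 3 * tc)); [apply exp_pos| apply Glow; lra]. }
  set (Gm := 1 + 3 * tc).
  assert (Gup : forall t, 0 <= t <= tc -> g t <= Gm).
  { intros t Ht.
    assert (H : (fun s => g s - 3 * s) t <= (fun s => g s - 3 * s) 0).
    { apply (mono_le 0 t (fun s => g s - 3 * s) (fun s => (3 * x s ^ 2 * f s ^ 3 - 3 * x s ^ 2 * f s * g s) - 3)); [lra| | |].
      - intros c Hc. apply cw_minus; [apply CWg; lra| apply cw_mult; [apply cw_const|apply cw_id]].
      - intros s Hs. pose proof (Gd s ltac:(lra)). autoD. ring.
      - intros s Hs. destruct (K s ltac:(lra)). destruct (F2 s ltac:(lra)).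
        assert (0 <= g s) by (apply Rle_trans with (exp (-3 * tc)); [left; apply exp_pos| apply Glow; lra]).
        assert (f s ^ 3 <= 1) by (simpl; nra).
        assert (0 <= x s ^ 2 * f s * g s) by (apply Rmult_le_pos; [apply Rmult_le_pos|]; lra).
        nra. }
    simpl in H. rewrite G0 in H. unfold Gm. lra. }
  assert (Gpos : forall t, 0 <= t <= tc -> 0 <= g t).
  { intros t Ht. apply Rle_trans with (exp (-3 * tc)); [left; apply exp_pos| apply Glow; lra]. }
  assert (Gdb : forall s, 0 < s < tc -> Rabs (3 * x s ^ 2 * f s ^ 3 - 3 * x s ^ 2 * f s * g s) <= 3 * (1 + Gm) * (tc - s)).
  { intros s Hs. destruct (K s ltac:(lra)). destruct (F2 s ltac:(lra)). pose proof (Gup s ltac:(lra)).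
    pose proof (Gpos s ltac:(lra)).
    replace (3 * x s ^ 2 * f s ^ 3 - 3 * x s ^ 2 * f s * g s) with (3 * x s ^ 2 * f s * (f s * f s - g s)) by ring.
    rewrite !Rabs_mult. rewrite (Rabs_pos_eq 3), (Rabs_pos_eq (x s ^ 2)), (Rabs_pos_eq (f s)) by lra.
    assert (Rabs (f s * f s - g s) <= 1 + Gm) by (split_Rabs; nra).
    assert (x s ^ 2 * f s <= tc - s) by nra.
    assert (0 <= x s ^ 2 * f s) by nra.
    assert (x s ^ 2 * f s * Rabs (f s * f s - g s) <= (tc - s) * (1 + Gm)).
    { apply Rmult_le_compat; auto; apply Rabs_pos. }
    nra. }
  set (Cg := 3 * (1 + Gm) * tc).
  assert (Glip : forall t, 0 < t <= tc -> Rabs (g t - beta) <= Cg * (tc - t)).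
  { intros t Ht. rewrite <- Rabs_Ropp. replace (- (g t - beta)) with (g tc - g t) by (unfold beta; ring).
    apply Rle_trans with ((3 * (1 + Gm) * (tc - t)) * (tc - t)).
    - apply (lip_bound t tc g (fun s => 3 * x s ^ 2 * f s ^ 3 - 3 * x s ^ 2 * f s * g s)); [lra| | |].
      + intros c Hc. apply CWg; lra.
      + intros s Hs. apply Gd; lra.
      + intros s Hs. eapply Rle_trans; [apply Gdb; lra|]. assert (0 <= 1 + Gm) by (unfold Gm; lra). nra.
    - unfold Cg. assert (0 <= 1 + Gm) by (unfold Gm; lra). assert (0 <= 3 * (1 + Gm) * (tc - t)) by nra. nra. }
  assert (CWs' : forall c, 0 <= c < tc -> cw 0 tc s2 c).
  { intros c Hc. apply cw_of_open; [lra| apply Sc; lra]. }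
  set (A4 := fun u => 4 * (1 - x (cl u) ^ 2) * s2 (cl u)).
  set (B4 := fun u => 7 * x (cl u) ^ 2 + 3 * (1 - x (cl u) ^ 2) * (g (cl u) * s2 (cl u) ^ 3) ^ 2).
  assert (CA4 : forall s, s < tc -> continuous A4 s).
  { intros s Hs. apply (clamp_cont 0 tc (fun v => 4 * (1 - x v ^ 2) * s2 v)); [lra|].
    assert (0 <= clamp 0 tc s <= tc) by (apply clamp_in; lra). assert (clamp 0 tc s < tc) by (apply clamp_lt; lra).
    apply cw_mult; [apply cw_mult; [apply cw_const| apply cw_minus; [apply cw_const| apply cw_pow, CWx]]| apply CWs']; lra. }
  assert (CB4 : forall s, s < tc -> continuous B4 s).
  { intros s Hs. apply (clamp_cont 0 tc (fun v => 7 * x v ^ 2 + 3 * (1 - x v ^ 2) * (g v * s2 v ^ 3) ^ 2)); [lra|].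
    assert (0 <= clamp 0 tc s <= tc) by (apply clamp_in; lra). assert (clamp 0 tc s < tc) by (apply clamp_lt; lra).
    apply cw_plus; [apply cw_mult; [apply cw_const| apply cw_pow, CWx]; lra|].
    apply cw_mult; [apply cw_mult; [apply cw_const| apply cw_minus; [apply cw_const| apply cw_pow, CWx]]|]; try lra.
    apply cw_pow, cw_mult; [apply CWg| apply cw_pow, CWs']; lra. }
  destruct (LIN A4 B4 tc 1 Htc CA4 CB4) as [Y0 YD].
  assert (Ssol : s_sol x tc s2 (fun t => g t * s2 t ^ 3) (Ysol A4 B4 1)).
  { split; [auto| split; [rewrite G0, S0; ring| split; [auto| split]]].
    - intros t Ht. split; [apply Sc; auto| split].
      + apply (fl_mult (F := within (fun u => 0 <= u < tc) (locally t)) g (fun v => s2 v ^ 3)).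
        * apply within_sub with (fun u => 0 <= u <= tc); [intros; lra| apply Gc; lra].
        * apply fl_pow. apply Sc; auto.
      + intros P HP. apply filter_le_within.
        apply (ex_derive_continuous (K:=R_AbsRing) (V:=R_NormedModule) (Ysol A4 B4 1) t); [|exact HP].
        exists (A4 t * Ysol A4 B4 1 t + B4 t). apply YD; lra.
    - intros t Ht. pose proof (Sd t Ht) as D2. pose proof (Gd t Ht) as D3.
      split; [auto| split].
      + autoD. rewrite (Finv t) by lra. pose proof (S2ge1 t ltac:(lra)). field. lra.
      + cbv beta.
        assert (E : A4 t * Ysol A4 B4 1 t + B4 t = 7 * x t ^ 2 + (1 - x t ^ 2) * (4 * s2 t * Ysol A4 B4 1 t + 3 * (g t * s2 t ^ 3) ^ 2))
          by (unfold A4, B4, cl; rewrite clamp_id by lra; ring).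
        rewrite <- E. apply YD; lra. }
  split; [exact Halpha|]. split; [exact Hbeta|]. split; [exists (fun t => g t * s2 t ^ 3), (Ysol A4 B4 1); exact Ssol|].
  split; [intros a2 a3 a4 b2 b3 b4 Ha Hb; apply (s_unique x tc); auto|].
  intros s3 s4 Hsol.
  assert (S3 : forall t, 0 <= t < tc -> s3 t = g t * s2 t ^ 3).
  { intros t Ht. destruct (s_unique x tc s2 s3 s4 s2 _ _ Hxpos Htc Hsol Ssol t Ht) as [_ [E _]]. exact E. }
  destruct Hsol as [_ [_ [_ [_ Hsd]]]].
  assert (S2f : forall t, 0 <= t < tc -> s2 t = / f t).
  { intros t Ht. rewrite Finv by auto. rewrite Rinv_inv. reflexivity. }
  set (C1 := tc + 4).
  assert (A1 : forall t, 0 < t < tc -> Rabs (f t - kc * (tc - t)) <= C1 * ((tc - t) * (tc - t))).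
  { intros t Ht.
    assert (H : Rabs ((fun s => f s - kc * (tc - s)) tc - (fun s => f s - kc * (tc - s)) t) <= (C1 * (tc - t)) * (tc - t)).
    { apply (lip_bound t tc (fun s => f s - kc * (tc - s)) (fun s => - x s ^ 2 * f s ^ 2 - (1 - x s ^ 2) + kc)); [lra| | |].
      - intros c Hc. apply cw_minus; [apply CWf; lra|]. apply cw_mult; [apply cw_const|]. apply cw_minus; [apply cw_const|apply cw_id].
      - intros s Hs. pose proof (Fd s ltac:(lra)). autoD. ring.
      - intros s Hs. destruct (K s ltac:(lra)). destruct (F2 s ltac:(lra)). pose proof (X2 s ltac:(lra)).
        replace (- x s ^ 2 * f s ^ 2 - (1 - x s ^ 2) + kc) with (- (x s ^ 2 * f s ^ 2) + (x s ^ 2 - x tc ^ 2)) by (unfold kc; ring).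
        eapply Rle_trans; [apply Rabs_triang|]. rewrite Rabs_Ropp, Rabs_pos_eq by (simpl; nra).
        assert (x s ^ 2 * f s ^ 2 <= (tc - s) * (tc - s)) by (simpl; nra).
        assert ((tc - s) * (tc - s) <= tc * (tc - t)) by nra.
        unfold C1. nra. }
    simpl in H. rewrite Ftc in H. rewrite <- Rabs_Ropp. replace (- (f t - kc * (tc - t))) with (0 - kc * (tc - tc) - (f t - kc * (tc - t))) by ring.
    lra. }
  assert (HC1 : 0 < C1) by (unfold C1; lra).
  set (d0 := Rmin tc (kc / (2 * C1))).
  assert (Hd0 : 0 < d0 /\ d0 <= tc /\ d0 <= kc / (2 * C1)).
  { unfold d0. split; [apply Rmin_glb_lt; [lra| apply Rdiv_lt_0_compat; lra]| split; [apply Rmin_l| apply Rmin_r]]. }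
  assert (A2 : forall t, tc - d0 < t < tc -> kc * (tc - t) / 2 <= f t).
  { intros t Ht. assert (0 < t) by lra. pose proof (A1 t ltac:(lra)).
    assert (C1 * (tc - t) <= kc / 2).
    { assert (tc - t <= kc / (2 * C1)) by lra.
      apply Rmult_le_compat_l with (r := C1) in H1; [|lra]. replace (C1 * (kc / (2 * C1))) with (kc / 2) in H1 by (field; lra). lra. }
    assert (C1 * ((tc - t) * (tc - t)) <= kc / 2 * (tc - t)) by nra.
    revert H0; split_Rabs; lra. }
  assert (O2 : O1 tc (fun t => s2 t * (tc - t) ^ 1 / alpha)).
  { exists (2 * C1 / kc), d0. split; [lra|]. intros t Ht.
    assert (0 < t) by lra. pose proof (A2 t Ht). pose proof (A1 t ltac:(lra)).
    assert (Hfp : 0 < f t) by (apply Fpos; lra).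
    replace (s2 t * (tc - t) ^ 1 / alpha - 1) with ((kc * (tc - t) - f t) / f t)
      by (rewrite S2f by lra; unfold alpha; fold kc; field; lra).
    rewrite Rabs_div by lra. rewrite (Rabs_pos_eq (f t)) by lra. rewrite <- Rabs_Ropp.
    replace (- (kc * (tc - t) - f t)) with (f t - kc * (tc - t)) by ring.
    apply Rle_trans with (C1 * ((tc - t) * (tc - t)) / f t).
    - unfold Rdiv. apply Rmult_le_compat_r; auto. left; apply Rinv_0_lt_compat; auto.
    - apply Rle_trans with (C1 * ((tc - t) * (tc - t)) / (kc * (tc - t) / 2)).
      + apply div_le_den; [apply Rdiv_lt_0_compat; [apply Rmult_lt_0_compat|]; lra| lra| ].
        apply Rmult_le_pos; [lra| apply Rmult_le_pos; lra].
      + right. field. lra. }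
  assert (Og : O1 tc (fun t => g t / beta)).
  { exists (Cg / beta), tc. split; [lra|]. intros t Ht. pose proof (Glip t ltac:(lra)).
    replace (g t / beta - 1) with ((g t - beta) / beta) by (field; lra).
    rewrite Rabs_div by lra. rewrite (Rabs_pos_eq beta) by lra.
    replace (Cg / beta * (tc - t)) with ((Cg * (tc - t)) / beta) by (field; lra).
    unfold Rdiv. apply Rmult_le_compat_r; auto. left; apply Rinv_0_lt_compat; auto. }
  set (rho := fun s => 7 * x s ^ 2 * f s ^ 5 - 15 * x s ^ 2 * f s * g s ^ 2
                       - 6 * g s * (3 * x s ^ 2 * f s ^ 3 - 3 * x s ^ 2 * f s * g s)).
  set (uu := fun s => s4 s * f s ^ 5 - 3 * g s ^ 2).
  set (bb := fun s => / (tc - s) - (1 - x s ^ 2) / f s - 5 * x s ^ 2 * f s).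
  set (du := fun s => - ((1 - x s ^ 2) / f s + 5 * x s ^ 2 * f s) * uu s + rho s).
  assert (UD : forall s, 0 < s < tc -> is_derive uu s (du s)).
  { intros s Hs. destruct (Hsd s Hs) as [_ [_ D4]]. pose proof (Fd s Hs). pose proof (Gd s Hs).
    unfold uu. autoD. unfold du, uu, rho. rewrite (S3 s) by lra. rewrite (S2f s) by lra.
    pose proof (Fpos s ltac:(lra)). field. lra. }
  set (Kr := 7 + 15 * Gm ^ 2 + 18 * Gm * (1 + Gm)).
  assert (HGm : 1 <= Gm) by (unfold Gm; lra).
  assert (Rho : forall s, 0 < s < tc -> Rabs (rho s) <= Kr * (tc - s)).
  { intros s Hs. destruct (K s ltac:(lra)) as [K1 K2]. destruct (F2 s ltac:(lra)) as [[F21 F22] F23].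
    pose proof (Gup s ltac:(lra)). pose proof (Gpos s ltac:(lra)). pose proof (Gdb s Hs).
    unfold rho. eapply Rle_trans; [apply Rabs_triang|]. rewrite Rabs_Ropp.
    eapply Rle_trans; [apply Rplus_le_compat_r, Rabs_triang|]. rewrite Rabs_Ropp.
    assert (f s ^ 5 <= f s) by (simpl; assert (f s * f s <= 1) by nra; assert (f s ^ 4 <= 1) by (simpl; nra); simpl in *; nra).
    assert (0 <= f s ^ 5) by (apply pow_le; lra).
    assert (Rabs (7 * x s ^ 2 * f s ^ 5) <= 7 * (tc - s)) by (rewrite Rabs_pos_eq by (apply Rmult_le_pos; [apply Rmult_le_pos|]; lra); nra).
    assert (Rabs (15 * x s ^ 2 * f s * g s ^ 2) <= 15 * Gm ^ 2 * (tc - s)).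
    { rewrite Rabs_pos_eq by (apply Rmult_le_pos; [apply Rmult_le_pos; [apply Rmult_le_pos|]| apply pow_le]; lra).
      assert (g s ^ 2 <= Gm ^ 2) by (simpl; nra). assert (0 <= g s ^ 2) by (apply pow_le; lra).
      assert (x s ^ 2 * f s <= tc - s) by nra. assert (0 <= x s ^ 2 * f s) by nra. nra. }
    assert (Rabs (6 * g s * (3 * x s ^ 2 * f s ^ 3 - 3 * x s ^ 2 * f s * g s)) <= 18 * Gm * (1 + Gm) * (tc - s)).
    { rewrite !Rabs_mult. rewrite (Rabs_pos_eq 6), (Rabs_pos_eq (g s)) by lra.
      assert (0 <= Rabs (3 * x s ^ 2 * f s ^ 3 - 3 * x s ^ 2 * f s * g s)) by apply Rabs_pos.
      assert (6 * g s <= 6 * Gm) by lra.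
      assert (6 * g s * Rabs (3 * x s ^ 2 * f s ^ 3 - 3 * x s ^ 2 * f s * g s) <= 6 * Gm * (3 * (1 + Gm) * (tc - s)))
        by (apply Rmult_le_compat; lra).
      lra. }
    unfold Kr. lra. }
  set (Bb := 2 * (C1 + 4) / kc + 5 * tc).
  assert (Bbd : forall s, tc - d0 < s < tc -> Rabs (bb s) <= Bb).
  { intros s Hs. assert (0 < s) by lra. destruct (K s ltac:(lra)) as [K1 K2]. destruct (F2 s ltac:(lra)) as [[F21 F22] F23].
    pose proof (A1 s ltac:(lra)). pose proof (A2 s Hs). pose proof (X2 s ltac:(lra)).
    assert (Hfp : 0 < f s) by (apply Fpos; lra).
    unfold bb. eapply Rle_trans; [apply Rabs_triang|]. rewrite Rabs_Ropp.
    rewrite (Rabs_pos_eq (5 * x s ^ 2 * f s)) by nra.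
    assert (5 * x s ^ 2 * f s <= 5 * tc) by nra.
    replace (/ (tc - s) - (1 - x s ^ 2) / f s) with ((f s - (1 - x s ^ 2) * (tc - s)) / ((tc - s) * f s)) by (field; lra).
    rewrite Rabs_div by nra. rewrite (Rabs_pos_eq ((tc - s) * f s)) by nra.
    assert (Hn : Rabs (f s - (1 - x s ^ 2) * (tc - s)) <= (C1 + 4) * ((tc - s) * (tc - s))).
    { replace (f s - (1 - x s ^ 2) * (tc - s)) with ((f s - kc * (tc - s)) + (x s ^ 2 - x tc ^ 2) * (tc - s)) by (unfold kc; ring).
      eapply Rle_trans; [apply Rabs_triang|]. rewrite Rabs_mult, (Rabs_pos_eq (tc - s)) by lra.
      assert (Rabs (x s ^ 2 - x tc ^ 2) * (tc - s) <= 4 * (tc - s) * (tc - s)) by (apply Rmult_le_compat_r; lra).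
      lra. }
    assert (Rabs (f s - (1 - x s ^ 2) * (tc - s)) / ((tc - s) * f s) <= 2 * (C1 + 4) / kc).
    { apply Rle_trans with ((C1 + 4) * ((tc - s) * (tc - s)) / ((tc - s) * f s)).
      - unfold Rdiv. apply Rmult_le_compat_r; auto. left; apply Rinv_0_lt_compat; nra.
      - apply Rle_trans with ((C1 + 4) * ((tc - s) * (tc - s)) / ((tc - s) * (kc * (tc - s) / 2))).
        + apply div_le_den; [apply Rmult_lt_0_compat; [lra| apply Rdiv_lt_0_compat; [apply Rmult_lt_0_compat|]; lra]| nra| ].
          apply Rmult_le_pos; [lra| apply Rmult_le_pos; lra].
        + right. field. lra. }
    unfold Bb. lra. }
  set (L := 2 * Bb + Kr).
  assert (HBb : 0 <= Bb) by (unfold Bb; assert (0 <= 2 * (C1 + 4) / kc) by (apply Rdiv_le_0_compat; lra); lra).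
  assert (HKr : 0 <= Kr) by (unfold Kr; nra).
  set (W := fun s => ((uu s / (tc - s)) ^ 2 + 1) * exp (- L * s)).
  set (dW := fun s => (2 * (uu s / (tc - s)) * ((du s * (tc - s) + uu s) / ((tc - s) ^ 2))
                       - L * ((uu s / (tc - s)) ^ 2 + 1)) * exp (- L * s)).
  assert (WD : forall s, 0 < s < tc -> is_derive W s (dW s)).
  { intros s Hs. pose proof (UD s Hs). unfold W. autoD; [lra| unfold dW; field; lra]. }
  assert (WN : forall s, tc - d0 < s < tc -> dW s <= 0).
  { intros s Hs. assert (0 < s) by lra. pose proof (Bbd s Hs). pose proof (Rho s ltac:(lra)).
    assert (Hfp : 0 < f s) by (apply Fpos; lra).
    set (V := uu s / (tc - s)). set (sg := rho s / (tc - s)).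
    assert (E : (du s * (tc - s) + uu s) / ((tc - s) ^ 2) = bb s * V + sg).
    { unfold V, sg, bb, du. field. lra. }
    assert (Hsg : Rabs sg <= Kr).
    { unfold sg. rewrite Rabs_div by lra. rewrite (Rabs_pos_eq (tc - s)) by lra.
      apply Rle_trans with (Kr * (tc - s) / (tc - s)); [unfold Rdiv; apply Rmult_le_compat_r; auto; left; apply Rinv_0_lt_compat; lra| right; field; lra]. }
    unfold dW. fold V. rewrite E.
    assert (0 < exp (- L * s)) by apply exp_pos.
    assert (bb s <= Bb) by (pose proof (Rle_abs (bb s)); lra).
    assert (0 <= V ^ 2) by (apply pow2_ge_0).
    assert (bb s * V ^ 2 <= Bb * V ^ 2) by (apply Rmult_le_compat_r; lra).
    assert (V * sg <= Rabs V * Kr).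
    { apply Rle_trans with (Rabs (V * sg)); [apply Rle_abs| rewrite Rabs_mult; apply Rmult_le_compat_l; auto; apply Rabs_pos]. }
    assert (2 * Rabs V <= V ^ 2 + 1) by (rewrite <- (pow2_abs V); pose proof (pow2_ge_0 (Rabs V - 1)); simpl in *; nra).
    assert (Rabs V * Kr * 2 <= Kr * (V ^ 2 + 1)) by nra.
    assert (2 * V * (bb s * V + sg) - L * (V ^ 2 + 1) <= 0) by (unfold L; simpl in *; nra).
    nra. }
  set (t0 := tc - d0 / 2).
  set (V2 := ((uu t0 / (tc - t0)) ^ 2 + 1) * exp (L * tc)).
  assert (HV2 : 1 <= V2).
  { unfold V2. assert (1 <= exp (L * tc)) by (rewrite <- exp_0; apply exp_mono; unfold L; nra).
    assert (0 <= (uu t0 / (tc - t0)) ^ 2) by apply pow2_ge_0. nra. }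
  assert (UB : forall t, t0 <= t < tc -> Rabs (uu t) <= V2 * (tc - t)).
  { intros t Ht.
    assert (HW : W t <= W t0).
    { apply (mono_le t0 t W dW); [lra| | |].
      - intros c Hc. apply cw_of_derive with (dW c). apply WD. unfold t0 in *; lra.
      - intros s Hs. apply WD. unfold t0 in *; lra.
      - intros s Hs. apply WN. unfold t0 in *; lra. }
    unfold W in HW.
    assert (Hv : (uu t / (tc - t)) ^ 2 + 1 <= V2).
    { assert (E1 : exp (- L * t) * exp (L * t) = 1) by (rewrite <- exp_plus; replace (- L * t + L * t) with 0 by ring; apply exp_0).
      assert (0 < exp (L * t)) by apply exp_pos.
      apply Rmult_le_compat_r with (r := exp (L * t)) in HW; [|lra].
      rewrite Rmult_assoc, E1, Rmult_1_r in HW.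
      eapply Rle_trans; [exact HW|]. unfold V2. rewrite Rmult_assoc, <- exp_plus.
      apply Rmult_le_compat_l; [pose proof (pow2_ge_0 (uu t0 / (tc - t0))); lra|].
      apply exp_mono. unfold t0 in *. assert (0 <= L) by (unfold L; lra). nra. }
    pose proof (abs_le_of_sq _ _ HV2 Hv) as Hv2.
    replace (uu t) with ((uu t / (tc - t)) * (tc - t)) by (field; lra).
    rewrite Rabs_mult, (Rabs_pos_eq (tc - t)) by lra. apply Rmult_le_compat_r; lra. }
  assert (Oh : O1 tc (fun t => s4 t * f t ^ 5 / (3 * beta ^ 2))).
  { exists ((V2 + 6 * Gm * Cg) / (3 * beta ^ 2)), (d0 / 2). split; [lra|]. intros t Ht.
    assert (Ht0 : t0 <= t < tc) by (unfold t0; lra).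
    pose proof (UB t Ht0). pose proof (Glip t ltac:(lra)).
    pose proof (Gup t ltac:(lra)). pose proof (Gpos t ltac:(lra)).
    assert (beta <= Gm) by (unfold beta; apply Gup; lra).
    assert (Hb2 : 0 < 3 * beta ^ 2) by (simpl; nra).
    replace (s4 t * f t ^ 5 / (3 * beta ^ 2) - 1) with ((uu t + 3 * ((g t - beta) * (g t + beta))) / (3 * beta ^ 2))
      by (unfold uu; field; lra).
    rewrite Rabs_div by lra. rewrite (Rabs_pos_eq (3 * beta ^ 2)) by lra.
    replace ((V2 + 6 * Gm * Cg) / (3 * beta ^ 2) * (tc - t)) with ((V2 * (tc - t) + 3 * ((Cg * (tc - t)) * (2 * Gm))) / (3 * beta ^ 2))
      by (field; lra).
    unfold Rdiv. apply Rmult_le_compat_r; [left; apply Rinv_0_lt_compat; lra|].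
    eapply Rle_trans; [apply Rabs_triang|]. apply Rplus_le_compat; auto.
    rewrite Rabs_mult, (Rabs_pos_eq 3) by lra. apply Rmult_le_compat_l; [lra|].
    rewrite Rabs_mult. apply Rmult_le_compat; try apply Rabs_pos; auto.
    rewrite Rabs_pos_eq by lra. lra. }
  assert (Hal0 : alpha <> 0) by lra.
  assert (Hbe0 : beta <> 0) by lra.
  assert (O3 : O1 tc (fun t => s3 t * (tc - t) ^ 3 / (beta * alpha ^ 3))).
  { apply O1_ext with (fun t => g t / beta * (s2 t * (tc - t) ^ 1 / alpha) * (s2 t * (tc - t) ^ 1 / alpha) * (s2 t * (tc - t) ^ 1 / alpha)); auto.
    - apply O1_mult; [apply O1_mult; [apply O1_mult|]|]; auto.
    - intros t Ht. rewrite S3 by lra. field. auto. }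
  assert (O5 : O1 tc (fun t => s4 t * (tc - t) ^ 5 / (3 * beta ^ 2 * alpha ^ 5))).
  { apply O1_ext with (fun t => s4 t * f t ^ 5 / (3 * beta ^ 2) * (s2 t * (tc - t) ^ 1 / alpha) * (s2 t * (tc - t) ^ 1 / alpha)
        * (s2 t * (tc - t) ^ 1 / alpha) * (s2 t * (tc - t) ^ 1 / alpha) * (s2 t * (tc - t) ^ 1 / alpha)); auto.
    - apply O1_mult; [|exact O2]. apply O1_mult; [|exact O2]. apply O1_mult; [|exact O2]. apply O1_mult; [|exact O2]. apply O1_mult; [exact Oh|exact O2].
    - intros t Ht. rewrite S2f by lra. pose proof (Fpos t ltac:(lra)). field. repeat split; lra. }
  split; [apply (equiv_of_O1 tc _ _ _ Htc O2); intros t Ht; field; lra|].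
  split; [apply (equiv_of_O1 tc _ _ _ Htc Og); intros t Ht; rewrite S3 by lra; pose proof (S2ge1 t ltac:(lra)); field; lra|].
  split; [apply (equiv_of_O1 tc _ _ _ Htc O3); intros t Ht; field; lra|].
  split; [apply (equiv_of_O1 tc _ _ _ Htc Oh); intros t Ht; rewrite S2f by lra; pose proof (Fpos t ltac:(lra)); field; lra|].
  split; [apply (equiv_of_O1 tc _ _ _ Htc O5); intros t Ht; field; lra|].
  split; [exact O2|]. split; [exact O3| exact O5].
Qed.
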